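(* Let $(G, \phi, (g_1,\dots,g_n))$ be an $n$-expansion group. Then $((L_\bullet(G), [\,,]_G), L_\bullet(\phi))$ is an $n$-expansion Lie algebra.
   Context: $V_{[n]} = \mathbb{F}_2^n$ with basis $e_1,\dots,e_n$. An $n$-expansion group is a triple $(G,\phi,(g_1,\dots,g_n))$: $G$ a group, $\phi: G\to V_{[n]}$ a homomorphism with $\phi(g_i) = e_i$, $g_i^2 = 1$ for all $i$, $\ker\phi$ an elementary abelian $2$-group, and $[G,G]=\ker\phi$. For a group $G$ let $G^{(1)} = G$, $G^{(i+1)} = [G, G^{(i)}]$, $L_m(G) = G^{(m)}/G^{(m+1)}$, $L_\bullet(G) = \bigoplus_{m\geq1}L_m(G)$ with bracket $[\,,]_G$ induced by group commutators (a graded Lie algebra), and for a homomorphism $\phi$, $L_\bullet(\phi)$ the induced graded Lie algebra homomorphism; $V_{[n]}$ is viewed as a graded Lie algebra concentrated in degree $1$ with zero bracket. A graded Lie algebra over $\mathbb{F}_2$ is a Lie algebra $L_\bullet = \bigoplus_{m\geq1}L_m$ over $\mathbb{F}_2$ with $[L_h,L_k]\subseteq L_{h+k}$. An $n$-expansion Lie algebra is a pair $(L_\bullet,\psi)$ with: (1) $L_\bullet$ a graded Lie algebra over $\mathbb{F}_2$ and $\psi: L_\bullet\to V_{[n]}$ a surjective graded Lie algebra homomorphism; (2) $\ker\psi$ an abelian subalgebra; (3) $[L_\bullet,L_\bullet] = \ker\psi$; (4) for each $i\geq4$ and $\sigma_1,\dots,\sigma_i\in L_1$, the element $[\sigma_1,[\sigma_2,[\dots,[\sigma_{i-1},\sigma_i]\dots]]]$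 does not depend on the order of $\sigma_1,\dots,\sigma_{i-2}$ and vanishes whenever $\sigma_s=\sigma_t$ for distinct $s,t\in\{1,\dots,i-2\}$; moreover, if $\tau_1,\tau_2\in L_1$ and $\psi(\tau_1)\in\{e_1,\dots,e_n\}$, then $[\tau_1,[\tau_1,\tau_2]]=0$. *)

(* Defs.v *)
From HB Require Import structures.
From mathcomp Require Import all_boot all_order all_algebra all_fingroup all_solvable.
From mathcomp Require Import abelian nilpotent.
From Stdlib Require Import Permutation.
Set Implicit Arguments. Unset Strict Implicit. Unset Printing Implicit Defensive.
Import GRing.Theory.
Local Open Scope nat_scope.

Definition Vn (n : nat) := 'rV['F_2]_n.
Definition e_ (n : nat) (i : 'I_n) : Vn n := delta_mx (@ord0 0) i.

Definition n_expansion_group (gT : finGroupType) (G : {group gT}) (n : nat)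
    (phi : gT -> Vn n) (g : 'I_n -> gT) : Prop :=
  [/\ {in G &, forall x y, phi (x * y)%g = (phi x + phi y)%R},
      (forall i, g i \in G /\ (g i ^+ 2 = 1)%g /\ phi (g i) = e_ i),
      (2.-abelem [set x in G | phi x == 0%R])%g &
      ([~: G, G] = [set x in G | phi x == 0%R])%g].

(* Graded Lie algebras over F_2, given as raw data on a carrier         *)
(* predicate inL of a type T:                                           *)
(*   add, zero : the additive structure (an F_2-vector space: since the *)
(*               only scalars are 0 and 1, it is an abelian group with  *)
(*               x + x = 0, the scalar action being forced),            *)
(*   hom m x   : x is homogeneous of degree m (x \in L_m), m >= 1.      *)
Section GradedLie.
Variables (T : Type) (inL : T -> Prop) (add : T -> T -> T) (zero : T)
          (br : T -> T -> T) (hom : nat -> T -> Prop).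

Definition lsum (s : seq T) : T := foldr add zero s.

Definition is_F2_space : Prop :=
  [/\ inL zero,
      (forall x y, inL x -> inL y -> inL (add x y)),
      (forall x y, inL x -> inL y -> add x y = add y x),
      (forall x y w, inL x -> inL y -> inL w -> add x (add y w) = add (add x y) w)
    & (forall x, inL x -> add zero x = x /\ add x x = zero)].

Definition is_Lie_bracket : Prop :=
  [/\ (forall x y, inL x -> inL y -> inL (br x y)),
      (forall x y w, inL x -> inL y -> inL w ->
          br (add x y) w = add (br x w) (br y w) /\
          br w (add x y) = add (br w x) (br w y)),
      (forall x, inL x -> br x x = zero)
    & (forall x y w, inL x -> inL y -> inL w ->
          add (br x (br y w)) (add (br y (br w x)) (br w (br x y))) = zero)].

Definition is_grading : Prop :=
  [/\ (forall m, 0 < m -> hom m zero /\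
         forall x y, hom m x -> hom m y -> hom m (add x y)),
      (forall m x, 0 < m -> hom m x -> inL x),
      (forall x, inL x -> exists s : seq T,
          (forall j, j < size s -> hom j.+1 (nth zero s j)) /\ x = lsum s),
      (forall s : seq T, (forall j, j < size s -> hom j.+1 (nth zero s j)) ->
          lsum s = zero -> forall j, j < size s -> nth zero s j = zero)
    & (forall h k x y, 0 < h -> 0 < k -> hom h x -> hom k y -> hom (h + k) (br x y))].

Definition is_graded_Lie_F2 : Prop :=
  [/\ is_F2_space, is_Lie_bracket & is_grading].

(* A surjective graded Lie algebra homomorphism onto V_[n], the latter *)
(* concentrated in degree 1 with zero bracket.                          *)
Definition is_graded_Lie_hom_onto_V (n : nat) (psi : T -> Vn n) : Prop :=
  [/\ psi zero = 0%R,
      (forall x y, inL x -> inL y -> psi (add x y) = (psi x + psi y)%R),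
      (forall m x, 2 <= m -> hom m x -> psi x = 0%R),
      (forall x y, inL x -> inL y -> psi (br x y) = 0%R)
    & (forall v : Vn n, exists2 x, inL x & psi x = v)].

Definition itbr (s : seq T) (a b : T) : T := foldr br (br a b) s.

Definition n_expansion_Lie (n : nat) (psi : T -> Vn n) : Prop :=
  [/\ is_graded_Lie_F2 /\ is_graded_Lie_hom_onto_V psi,
      (forall x y, inL x -> inL y -> psi x = 0%R -> psi y = 0%R ->
         [/\ psi (add x y) = 0%R, psi (br x y) = 0%R & br x y = zero]),
      (* (3) [L, L] = ker psi  ([L,L] = F_2-span of all brackets) *)
      (forall x, inL x -> (psi x = 0%R <->
         exists s : seq (T * T),
           (forall j, j < size s -> inL (nth (zero, zero) s j).1 /\
                                    inL (nth (zero, zero) s j).2) /\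
           x = lsum [seq br p.1 p.2 | p <- s])),
      (forall (s s' : seq T) (a b : T), 2 <= size s ->
         (forall j, j < size s -> hom 1 (nth zero s j)) -> hom 1 a -> hom 1 b ->
         Permutation s s' -> itbr s a b = itbr s' a b) /\
      (forall (s : seq T) (a b : T), 2 <= size s ->
         (forall j, j < size s -> hom 1 (nth zero s j)) -> hom 1 a -> hom 1 b ->
         forall j1 j2, j1 < j2 -> j2 < size s -> nth zero s j1 = nth zero s j2 ->
         itbr s a b = zero)
    & (forall t1 t2, hom 1 t1 -> hom 1 t2 -> (exists i : 'I_n, psi t1 = e_ i) ->
         br t1 (br t1 t2) = zero)].

End GradedLie.

(* The graded Lie algebra L_.(G) = (+)_{m>=1} G^(m)/G^(m+1), where     *)
(* G^(m) = 'L_m(G) (lower central series, 'L_1(G) = G).  An element is *)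
(* a family f with f m a coset of 'L_(m+1)(G) lying in 'L_m(G) /       *)
(* 'L_(m+1)(G), trivial for m = 0 and for all large m.                 *)
Section LieOfGroup.
Variables (gT : finGroupType) (G : {group gT}).

Definition LGT := forall m : nat, coset_of ('L_m.+1(G)).

Definition LG_in (f : LGT) : Prop :=
  [/\ f 0 = 1%g,
      (forall m, f m \in ('L_m(G) / 'L_m.+1(G))%g)
    & exists N, forall m, N <= m -> f m = 1%g].

Definition LG_add (f f' : LGT) : LGT := fun m => (f m * f' m)%g.
Definition LG_zero : LGT := fun m => 1%g.

(* [x G^(h+1), y G^(k+1)] = [x, y] G^(h+k+1), extended bilinearly *)
Definition LG_br (f f' : LGT) : LGT := fun m =>
  (\prod_(1 <= h < m) coset ('L_m.+1(G)) [~ repr (f h), repr (f' (m - h))])%g.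

Definition LG_hom (m : nat) (f : LGT) : Prop :=
  LG_in f /\ forall k, k <> m -> f k = 1%g.

(* L_.(phi) : L_.(G) -> L_.(V_[n]) = V_[n] (degree 1) *)
Definition LG_phi (n : nat) (phi : gT -> Vn n) (f : LGT) : Vn n :=
  phi (repr (f 1)).

End LieOfGroup.

(* Main.v *)
Require Import Defs.
From mathcomp Require Import all_boot all_order all_algebra all_fingroup all_solvable.
From mathcomp Require Import abelian nilpotent zify.
From Stdlib Require Import Permutation FunctionalExtensionality.
Set Implicit Arguments. Unset Strict Implicit. Unset Printing Implicit Defensive.
Import GRing.Theory.

Section Grp.
Local Open Scope group_scope.
Variables (gT : finGroupType) (G : {group gT}) (n : nat) (phi : gT -> Vn n) (g : 'I_n -> gT).
Hypothesis hG : n_expansion_group G phi g.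

Lemma phiM : {in G &, forall x y, phi (x * y) = (phi x + phi y)%R}.
Proof. by case: hG. Qed.

Lemma phi1 : phi 1 = 0%R.
Proof.
have := phiM (group1 G) (group1 G); rewrite mulg1 -{1}(addr0 (phi 1)).
by move/addrI.
Qed.

Lemma v2 (v : Vn n) : (v + v = 0)%R.
Proof.
apply/rowP=> j; rewrite !mxE.
by case: (v _ j) => [[|[|k]]] //= Hk; apply/val_inj.
Qed.

Lemma memA x : (x \in 'L_2(G)) = (x \in G) && (phi x == 0%R).
Proof.
have -> : 'L_2(G) = [~: G, G] by [].
by case: hG => _ _ _ ->; rewrite inE.
Qed.

Lemma A_abelem : (2.-abelem 'L_2(G))%g.
Proof.
have -> : 'L_2(G) = [~: G, G] by [].
by case: hG => _ _ H ->.
Qed.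

Lemma A_abel : abelian 'L_2(G).
Proof. by case/(abelemP (isT : prime 2)): A_abelem. Qed.

Lemma A_exp x : x \in 'L_2(G) -> x * x = 1.
Proof.
move=> xA; case/(abelemP (isT : prime 2)): A_abelem => _ /(_ x xA).
by rewrite expgS expg1.
Qed.

Lemma A_inv x : x \in 'L_2(G) -> x^-1 = x.
Proof. by move=> xA; apply/eqP; rewrite eq_invg_mul A_exp. Qed.

Lemma sqA x : x \in G -> x * x \in 'L_2(G).
Proof. by move=> xG; rewrite memA groupM //= phiM // v2. Qed.

Lemma HA m : 1 < m -> 'L_m(G) \subset 'L_2(G).
Proof. exact: lcn_sub_leq. Qed.

Lemma HG m x : x \in 'L_m(G) -> x \in G.
Proof. exact: (subsetP (lcn_sub m G)). Qed.

Lemma HN m x : x \in G -> x \in 'N('L_m(G)).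
Proof. exact: (subsetP (lcn_norm m G)). Qed.

Lemma HS m k x : k <= m -> x \in 'L_m(G) -> x \in 'L_k(G).
Proof. by move=> km; apply: (subsetP (lcn_sub_leq G km)). Qed.

Lemma commA x y : x \in 'L_2(G) -> y \in 'L_2(G) -> [~ x, y] = 1.
Proof.
move=> xA yA; apply/eqP/commgP; exact: (centsP A_abel).
Qed.

Lemma commH h k x y : 0 < h -> 0 < k -> x \in 'L_h(G) -> y \in 'L_k(G) ->
  [~ x, y] \in 'L_(h + k)(G).
Proof.
case: h => // [[|h]] _; case: k => // [[|k]] _ xH yH.
- by rewrite (_ : 'L_2(G) = [~: 'L_1(G), G]) // mem_commg.
- have -> : 'L_(1 + k.+2)(G) = [~: 'L_k.+2(G), G] by [].
  by rewrite commGC mem_commg.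
- have -> : 'L_(h.+2 + 1)(G) = [~: 'L_h.+2(G), G] by rewrite addn1.
  by rewrite mem_commg // HG.
- rewrite commA ?group1 //; exact: HS yH || exact: HS xH.
Qed.


Lemma cMg (x y z : gT) : (x * y) ^ z = x ^ z * y ^ z.
Proof. exact: conjMg. Qed.
Lemma cgM (x y z : gT) : x ^ (y * z) = (x ^ y) ^ z.
Proof. exact: conjgM. Qed.

Lemma mA (x y z : gT) : x * (y * z) = x * y * z.
Proof. exact: mulgA. Qed.

Lemma Acomm a b : a \in 'L_2(G) -> b \in 'L_2(G) -> a * b = b * a.
Proof. by move=> aA bA; apply: (centsP A_abel). Qed.

Lemma AJ a x : a \in 'L_2(G) -> x \in G -> a ^ x \in 'L_2(G).
Proof. by move=> aA xG; rewrite memJ_norm // HN. Qed.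

Lemma AJA a c : a \in 'L_2(G) -> c \in 'L_2(G) -> a ^ c = a.
Proof. by move=> aA cA; apply/conjg_fixP; rewrite commA. Qed.

Lemma commGG x y : x \in G -> y \in G -> [~ x, y] \in 'L_2(G).
Proof. by move=> xG yG; apply: (commH (h:=1) (k:=1)). Qed.

Lemma commGA x w : x \in G -> w \in 'L_2(G) -> [~ x, w] = w ^ x * w.
Proof. by move=> xG wA; rewrite commgEr A_inv. Qed.

Lemma commGA_A x w : x \in G -> w \in 'L_2(G) -> [~ x, w] \in 'L_2(G).
Proof. by move=> xG wA; rewrite commGG // (HG (m:=2)). Qed.

Lemma E1 x y w : x \in G -> y \in G -> w \in 'L_2(G) ->
  [~ x, [~ y, w]] = [~ y, [~ x, w]].
Proof.
move=> xG yG wA.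
have wyA := AJ wA yG; have wxA := AJ wA xG.
have h1 := commGA_A yG wA; have h2 := commGA_A xG wA.
rewrite (commGA xG h1) (commGA yG h2) (commGA yG wA) (commGA xG wA).
rewrite (cMg (w ^ y) w x) (cMg (w ^ x) w y) -!cgM.
have -> : w ^ (y * x) = w ^ (x * y).
  rewrite (commgC y x) (cgM w (x * y)) AJA //; first by rewrite AJ ?groupM.
  exact: commGG.
move: (w ^ (x * y)) (w ^ x) (w ^ y) wxA wyA => a b c bA cA.
by rewrite -!mA (mA b) (mA c) (Acomm bA cA).
Qed.

Lemma E2 x w : x \in G -> w \in 'L_2(G) -> [~ x, [~ x, w]] = 1.
Proof.
move=> xG wA.
have wxA := AJ wA xG.
have h1 := commGA_A xG wA.
rewrite (commGA xG h1) (commGA xG wA) (cMg (w ^ x) w x) -(cgM w x x).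
rewrite (AJA wA (sqA xG)).
move: (w ^ x) wxA => b bA.
by rewrite -!mA (mA b b) A_exp // mul1g A_exp.
Qed.

Lemma HWterm x y z : x \in G -> y \in G -> z \in G ->
  [~ x, y^-1, z] ^ y = [~ x, y] * [~ x, y] ^ z.
Proof.
move=> xG yG zG.
have vA : [~ x, y^-1] \in 'L_2(G) by rewrite commGG ?groupV.
have vy : [~ x, y^-1] ^ y = [~ x, y].
  rewrite -(A_inv (commGG xG yG)) invgR.
  by rewrite /conjg /commg; congr (_ * _); rewrite !conjgE invgK !mA mulgVK.
rewrite (commgEl [~ x, y^-1] z) (A_inv vA) (cMg _ _ y) -(cgM _ z y) vy.
have -> : z * y = y * z ^ y by rewrite conjgC.
rewrite (cgM _ y (z ^ y)) vy (conjg_mulR z y) (cgM _ z [~ z, y]) AJA //.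
  by rewrite AJ ?commGG.
by rewrite commGG.
Qed.

Lemma JacG x y z : x \in G -> y \in G -> z \in G ->
  [~ x, [~ y, z]] * [~ y, [~ z, x]] * [~ z, [~ x, y]] = 1.
Proof.
move=> xG yG zG.
have := Hall_Witt_identity x y z.
rewrite (HWterm xG yG zG) (HWterm yG zG xG) (HWterm zG xG yG).
have aA : [~ x, y] \in 'L_2(G) by rewrite commGG.
have bA : [~ y, z] \in 'L_2(G) by rewrite commGG.
have cA : [~ z, x] \in 'L_2(G) by rewrite commGG.
rewrite (commGA xG bA) (commGA yG cA) (commGA zG aA).
move: [~ x, y] [~ y, z] [~ z, x] aA bA cA => a b c aA bA cA.
rewrite (Acomm (AJ bA xG) bA) (Acomm (AJ cA yG) cA) (Acomm (AJ aA zG) aA).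
have p1A : a * a ^ z \in 'L_2(G) by rewrite groupM ?AJ.
have p2A : b * b ^ x \in 'L_2(G) by rewrite groupM ?AJ.
have p3A : c * c ^ y \in 'L_2(G) by rewrite groupM ?AJ.
move: (a * a ^ z) (b * b ^ x) (c * c ^ y) p1A p2A p3A => p1 p2 p3 p1A p2A p3A H.
by rewrite (Acomm (groupM p2A p3A) p1A) mA H.
Qed.

Local Notation C m := (coset 'L_m.+1(G)).
Local Notation Q m := ('L_m(G) / 'L_m.+1(G))%g.

Lemma CM m x y : x \in G -> y \in G -> C m (x * y) = C m x * C m y.
Proof. by move=> xG yG; rewrite morphM ?HN. Qed.

Lemma CV m x : x \in G -> C m x^-1 = (C m x)^-1.
Proof. by move=> xG; rewrite morphV ?HN. Qed.

Lemma C1 m x : x \in 'L_m.+1(G) -> C m x = 1.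
Proof. exact: coset_id. Qed.

Lemma Ceq m x y : x \in G -> y \in G -> C m x = C m y -> x^-1 * y \in 'L_m.+1(G).
Proof.
move=> xG yG e; apply: coset_idr; first by rewrite HN ?groupM ?groupV.
by rewrite CM ?groupV // CV // e mulVg.
Qed.

Lemma QP m u : u \in Q m -> exists2 x, x \in 'L_m(G) & u = C m x.
Proof. by case/morphimP=> x _ xL ->; exists x. Qed.

Lemma Qmem m x : x \in 'L_m(G) -> C m x \in Q m.
Proof. exact: mem_quotient. Qed.

Lemma Qab m u v : u \in Q m -> v \in Q m -> u * v = v * u.
Proof.
case/QP=> x xL ->; case/QP=> y yL ->.
have xG := HG xL; have yG := HG yL.
rewrite -!CM // (commgC x y) (@CM m (y * x) [~ x, y]) ?groupM ?groupV //.
rewrite (@C1 m [~ x, y]) ?mulg1 //.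
by apply: (subsetP (lcnSnS m G)); rewrite mem_commg.
Qed.

Lemma Qexp m u : u \in Q m -> u * u = 1.
Proof.
case/QP=> x xL ->; clear u; have xG := HG xL.
rewrite -CM // C1 //.
case: m xL => [|[|m]] xL; first by rewrite groupM.
  exact: sqA.
by rewrite A_exp ?group1 //; apply: HS xL.
Qed.

Lemma QinvE m u : u \in Q m -> u^-1 = u.
Proof. by move=> uQ; apply/eqP; rewrite eq_invg_mul Qexp. Qed.

Lemma rep_mem m u : u \in Q m -> repr u \in 'L_m(G).
Proof.
case/QP=> x xL ->.
have := mem_repr_coset (C m x).
rewrite val_coset ?HN ?(HG xL) // mem_rcoset => h.
rewrite -(mulgKV x (repr _)) groupM //.
exact: HS h.
Qed.

Lemma repK m (u : coset_of 'L_m.+1(G)) : C m (repr u) = u.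
Proof. exact: coset_reprK. Qed.

Lemma Cbr h k x y : 0 < h -> 0 < k -> x \in 'L_h(G) -> y \in 'L_k(G) ->
  C (h + k) [~ x, y] \in Q (h + k).
Proof. by move=> h0 k0 xL yL; rewrite Qmem ?commH. Qed.

Lemma wdl h k x x' y : 0 < h -> 0 < k -> x \in 'L_h(G) -> x' \in 'L_h(G) ->
  y \in 'L_k(G) -> C h x = C h x' -> C (h + k) [~ x, y] = C (h + k) [~ x', y].
Proof.
move=> h0 k0 xL x'L yL e.
have xG := HG xL; have x'G := HG x'L; have yG := HG yL.
have cL := Ceq xG x'G e.
have cG := HG cL.
have -> : x' = x * (x^-1 * x') by rewrite mulKVg.
move: (x^-1 * x') cL cG => c cL cG.
rewrite commMgJ conjg_mulR.
have bL := commH h0 k0 xL yL.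
have bG := HG bL.
have b2L : [~ [~ x, y], c] \in 'L_(h + k).+1(G).
  apply: HS (commH _ _ bL cL); by rewrite ?addn_gt0 ?h0 ?addnS ?ltnS ?leq_addr.
have b3L : [~ c, y] \in 'L_(h + k).+1(G).
  by apply: HS (commH _ k0 cL yL); rewrite ?addSn.
rewrite (@CM _ ([~ x, y] * [~ [~ x, y], c]) [~ c, y]); last 2 first.
- by rewrite groupM ?groupR.
- by rewrite groupR.
rewrite (@CM _ [~ x, y] [~ [~ x, y], c]); last 2 first.
- by rewrite groupR.
- by rewrite groupR.
by rewrite (@C1 _ [~ [~ x, y], c]) // (@C1 _ [~ c, y]) // !mulg1.
Qed.

Lemma wdr h k x y y' : 0 < h -> 0 < k -> x \in 'L_h(G) -> y \in 'L_k(G) ->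
  y' \in 'L_k(G) -> C k y = C k y' -> C (h + k) [~ x, y] = C (h + k) [~ x, y'].
Proof.
move=> h0 k0 xL yL y'L e.
have xG := HG xL; have y'G := HG y'L; have yG := HG yL.
have cL := Ceq yG y'G e.
have cG := HG cL.
have -> : y' = y * (y^-1 * y') by rewrite mulKVg.
move: (y^-1 * y') cL cG => c cL cG.
rewrite commgMJ conjg_mulR.
have bL := commH h0 k0 xL yL.
have bG := HG bL.
have b2L : [~ [~ x, y], c] \in 'L_(h + k).+1(G).
  apply: HS (commH _ _ bL cL); by rewrite ?addn_gt0 ?h0 ?addnS ?ltnS ?leq_addr.
have b3L : [~ x, c] \in 'L_(h + k).+1(G).
  by apply: HS (commH h0 _ xL cL); rewrite ?addnS.
rewrite (@CM _ [~ x, c] ([~ x, y] * [~ [~ x, y], c])); last 2 first.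
- by rewrite groupR.
- by rewrite groupM ?groupR.
rewrite (@CM _ [~ x, y] [~ [~ x, y], c]); last 2 first.
- by rewrite groupR.
- by rewrite groupR.
by rewrite (@C1 _ [~ [~ x, y], c]) // (@C1 _ [~ x, c]) // !mulg1 mul1g.
Qed.

Lemma bil_l h k x1 x2 y : 0 < h -> 0 < k -> x1 \in 'L_h(G) -> x2 \in 'L_h(G) ->
  y \in 'L_k(G) -> C (h + k) [~ x1 * x2, y] = C (h + k) [~ x1, y] * C (h + k) [~ x2, y].
Proof.
move=> h0 k0 x1L x2L yL.
have x1G := HG x1L; have x2G := HG x2L; have yG := HG yL.
rewrite commMgJ conjg_mulR.
have bL := commH h0 k0 x1L yL.
have bG := HG bL.
have b2L : [~ [~ x1, y], x2] \in 'L_(h + k).+1(G).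
  apply: HS (commH _ _ bL x2L); by rewrite ?addn_gt0 ?h0 // -addn1 leq_add2l.
rewrite (@CM _ ([~ x1, y] * [~ [~ x1, y], x2]) [~ x2, y]); last 2 first.
- by rewrite groupM ?groupR.
- by rewrite groupR.
rewrite (@CM _ [~ x1, y] [~ [~ x1, y], x2]); last 2 first.
- by rewrite groupR.
- by rewrite groupR.
by rewrite (@C1 _ [~ [~ x1, y], x2]) // !mulg1.
Qed.

Lemma bil_r h k x y1 y2 : 0 < h -> 0 < k -> x \in 'L_h(G) -> y1 \in 'L_k(G) ->
  y2 \in 'L_k(G) -> C (h + k) [~ x, y1 * y2] = C (h + k) [~ x, y1] * C (h + k) [~ x, y2].
Proof.
move=> h0 k0 xL y1L y2L.
have xG := HG xL; have y1G := HG y1L; have y2G := HG y2L.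
rewrite commgMJ conjg_mulR.
have bL := commH h0 k0 xL y1L.
have bG := HG bL.
have b2L : [~ [~ x, y1], y2] \in 'L_(h + k).+1(G).
  apply: HS (commH _ _ bL y2L); by rewrite ?addn_gt0 ?h0 // -addn1 leq_add2l.
rewrite (@CM _ [~ x, y2] ([~ x, y1] * [~ [~ x, y1], y2])); last 2 first.
- by rewrite groupR.
- by rewrite groupM ?groupR.
rewrite (@CM _ [~ x, y1] [~ [~ x, y1], y2]); last 2 first.
- by rewrite groupR.
- by rewrite groupR.
rewrite (@C1 _ [~ [~ x, y1], y2]) // !mulg1.
by apply: Qab; apply: Cbr.
Qed.

Lemma antisym h k x y : 0 < h -> 0 < k -> x \in 'L_h(G) -> y \in 'L_k(G) ->
  C (h + k) [~ y, x] = C (h + k) [~ x, y].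
Proof.
move=> h0 k0 xL yL.
by rewrite -invgR CV ?groupR ?(HG xL) ?(HG yL) // QinvE // Cbr.
Qed.


Lemma prod_one (rT : finGroupType) a b (F : nat -> rT) :
  (forall i, a <= i < b -> F i = 1) -> \prod_(a <= i < b) F i = 1.
Proof. by move=> H; rewrite big_nat_cond big1 // => i /andP[] /H. Qed.

Lemma prod_single (rT : finGroupType) a b j (F : nat -> rT) : a <= j < b ->
  (forall i, a <= i < b -> i != j -> F i = 1) -> \prod_(a <= i < b) F i = F j.
Proof.
move=> /andP[aj jb] H.
rewrite (@big_cat_nat _ _ _ j) //= ?(ltnW jb) //.
rewrite [\prod_(j <= i < b) F i]big_ltn //.
have -> : \prod_(a <= i < j) F i = 1.
  apply: prod_one => i /andP[ai ij]; apply: H; last by rewrite ltn_eqF.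
  by rewrite ai (ltn_trans ij jb).
have -> : \prod_(j.+1 <= i < b) F i = 1.
  apply: prod_one => i /andP[ji ib]; apply: H; last by rewrite gtn_eqF.
  by rewrite ib (leq_trans aj (ltnW ji)).
by rewrite mul1g mulg1.
Qed.


Local Notation T := (LGT G).
Local Notation inL := (@LG_in gT G).
Local Notation add := (@LG_add gT G).
Local Notation zero := (@LG_zero gT G).
Local Notation br := (@LG_br gT G).
Local Notation hom := (@LG_hom gT G).

Lemma fext (f f' : T) : (forall m, f m = f' m) -> f = f'.
Proof. exact: functional_extensionality_dep. Qed.

Lemma inQ (f : T) m : inL f -> f m \in Q m.
Proof. by case=> _ H _; apply: H. Qed.

Lemma repL (f : T) m : inL f -> repr (f m) \in 'L_m(G).
Proof. by move=> fL; apply: rep_mem; apply: inQ. Qed.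

Lemma repG (f : T) m : inL f -> repr (f m) \in G.
Proof. by move=> fL; apply: (HG (repL m fL)). Qed.

Lemma r1 m : repr (1 : coset_of 'L_m.+1(G)) = 1.
Proof. exact: repr_coset1. Qed.

Lemma brh_at (x y : T) h k : 0 < h -> 0 < k -> hom h x -> hom k y ->
  forall j, br x y j = if j == h + k then C j [~ repr (x h), repr (y k)] else 1.
Proof.
move=> h0 k0 [xL xh] [yL yk] j; rewrite /LG_br.
case: eqP => [->|ne].
  rewrite (@prod_single _ 1 (h + k) h); first by rewrite addKn.
    by rewrite h0 -{1}(addn0 h) ltn_add2l.
  move=> i _ /eqP ih; by rewrite xh // r1 comm1g morph1.
apply: prod_one => i /andP[i1 ij].
case: (eqVneq i h) => [eih|ih]; last by rewrite xh ?r1 ?comm1g ?morph1 //; apply/eqP.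
subst i.
rewrite yk ?r1 ?commg1 ?morph1 // => e; apply: ne.
by rewrite -e subnKC // ltnW.
Qed.


Lemma CbrE h k m x y : 0 < h -> 0 < k -> h + k = m -> x \in 'L_h(G) -> y \in 'L_k(G) ->
  C m [~ x, y] \in Q m.
Proof. by move=> h0 k0 <-; apply: Cbr. Qed.

Lemma in_zero : inL zero.
Proof. by split=> // [m|]; [rewrite group1 | exists 0]. Qed.

Lemma in_add x y : inL x -> inL y -> inL (add x y).
Proof.
move=> [x0 xQ [Nx xN]] [y0 yQ [Ny yN]]; split.
all: try by rewrite /LG_add x0 y0 mulg1.
all: try by move=> m; rewrite /LG_add groupM ?xQ ?yQ.
exists (maxn Nx Ny) => m; rewrite geq_max => /andP[/xN e1 /yN e2].
by rewrite /LG_add e1 e2 mulg1.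
Qed.

Lemma hom_in d f : hom d f -> inL f.
Proof. by case. Qed.

Lemma br_in x y : inL x -> inL y -> inL (br x y).
Proof.
move=> xL yL; split.
all: try by rewrite /LG_br big_geq.
all: try (move=> m; rewrite /LG_br big_seq_cond; apply: group_prod => i;
  rewrite mem_index_iota andbT => /andP[i1 im];
  by apply: (CbrE (h := i) (k := m - i)); rewrite ?subn_gt0 ?subnKC ?(ltnW im) ?repL).
case: xL => _ _ [Nx xN]; case: yL => _ _ [Ny yN].
exists (Nx + Ny) => m mN; rewrite /LG_br; apply: prod_one => i /andP[i1 im].
case: (leqP Nx i) => iN; first by rewrite xN // r1 comm1g morph1.
rewrite (yN (m - i)) ?r1 ?commg1 ?morph1 //.
by rewrite leq_subRL ?(ltnW im) // (leq_trans _ mN) // leq_add2r ltnW.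
Qed.

Lemma brh_hom x y h k : 0 < h -> 0 < k -> hom h x -> hom k y -> hom (h + k) (br x y).
Proof.
move=> h0 k0 hx hy; split; first by apply: br_in; [case: hx | case: hy].
by move=> j /eqP/negbTE jn; rewrite (brh_at h0 k0 hx hy) jn.
Qed.


Lemma add_C x y : inL x -> inL y -> add x y = add y x.
Proof. by move=> xL yL; apply: fext => m; rewrite /LG_add Qab ?inQ. Qed.

Lemma add_A x y w : add x (add y w) = add (add x y) w.
Proof. by apply: fext => m; rewrite /LG_add mulgA. Qed.

Lemma add_0 x : add zero x = x.
Proof. by apply: fext => m; rewrite /LG_add /LG_zero mul1g. Qed.

Lemma add_xx x : inL x -> add x x = zero.
Proof. by move=> xL; apply: fext => m; rewrite /LG_add /LG_zero Qexp ?inQ. Qed.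

Lemma prod_split m (s : seq nat) (F1 F2 : nat -> coset_of 'L_m.+1(G)) :
  (forall i, i \in s -> F1 i \in Q m) -> (forall i, i \in s -> F2 i \in Q m) ->
  \prod_(i <- s) (F1 i * F2 i) = \prod_(i <- s) F1 i * \prod_(i <- s) F2 i.
Proof.
elim: s => [|a s IH] H1 H2; first by rewrite !big_nil mulg1.
have H1' : forall i, i \in s -> F1 i \in Q m by move=> i iS; apply: H1; rewrite inE iS orbT.
have H2' : forall i, i \in s -> F2 i \in Q m by move=> i iS; apply: H2; rewrite inE iS orbT.
rewrite !big_cons IH //.
have P1 : \prod_(i <- s) F1 i \in Q m by rewrite big_seq; apply: group_prod.
rewrite -!mulgA; congr (_ * _); rewrite !mulgA; congr (_ * _).
by apply: Qab => //; apply: H2; rewrite inE eqxx.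
Qed.

Lemma wdlE h k m x x' y : 0 < h -> 0 < k -> h + k = m -> x \in 'L_h(G) -> x' \in 'L_h(G) ->
  y \in 'L_k(G) -> C h x = C h x' -> C m [~ x, y] = C m [~ x', y].
Proof. by move=> h0 k0 <-; apply: wdl. Qed.

Lemma wdrE h k m x y y' : 0 < h -> 0 < k -> h + k = m -> x \in 'L_h(G) -> y \in 'L_k(G) ->
  y' \in 'L_k(G) -> C k y = C k y' -> C m [~ x, y] = C m [~ x, y'].
Proof. by move=> h0 k0 <-; apply: wdr. Qed.

Lemma bil_lE h k m x1 x2 y : 0 < h -> 0 < k -> h + k = m -> x1 \in 'L_h(G) -> x2 \in 'L_h(G) ->
  y \in 'L_k(G) -> C m [~ x1 * x2, y] = C m [~ x1, y] * C m [~ x2, y].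
Proof. by move=> h0 k0 <-; apply: bil_l. Qed.

Lemma bil_rE h k m x y1 y2 : 0 < h -> 0 < k -> h + k = m -> x \in 'L_h(G) -> y1 \in 'L_k(G) ->
  y2 \in 'L_k(G) -> C m [~ x, y1 * y2] = C m [~ x, y1] * C m [~ x, y2].
Proof. by move=> h0 k0 <-; apply: bil_r. Qed.

Lemma br_addl x y w : inL x -> inL y -> inL w -> br (add x y) w = add (br x w) (br y w).
Proof.
move=> xL yL wL; apply: fext => m; rewrite /LG_br /LG_add.
rewrite -prod_split; last first.
- move=> i; rewrite mem_index_iota => /andP[i1 im].
  by apply: (CbrE (h := i) (k := m - i)); rewrite ?subn_gt0 ?subnKC ?(ltnW im) ?repL.
- move=> i; rewrite mem_index_iota => /andP[i1 im].
  by apply: (CbrE (h := i) (k := m - i)); rewrite ?subn_gt0 ?subnKC ?(ltnW im) ?repL.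
apply: eq_big_nat => i /andP[i1 im].
have k0 : 0 < m - i by rewrite subn_gt0.
have e : i + (m - i) = m by rewrite subnKC // ltnW.
have xyL : repr (x i * y i) \in 'L_i(G) by apply: rep_mem; rewrite groupM ?inQ.
rewrite (@wdlE i (m - i) m _ (repr (x i) * repr (y i))) ?repL ?groupM //.
  by rewrite (bil_lE i1 k0 e) ?repL.
all: try by apply: repL.
all: try by apply: repL.
by rewrite repK CM ?repG // !repK.
Qed.

Lemma br_addr x y w : inL x -> inL y -> inL w -> br w (add x y) = add (br w x) (br w y).
Proof.
move=> xL yL wL; apply: fext => m; rewrite /LG_br /LG_add.
rewrite -prod_split; last first.
- move=> i; rewrite mem_index_iota => /andP[i1 im].
  by apply: (CbrE (h := i) (k := m - i)); rewrite ?subn_gt0 ?subnKC ?(ltnW im) ?repL.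
- move=> i; rewrite mem_index_iota => /andP[i1 im].
  by apply: (CbrE (h := i) (k := m - i)); rewrite ?subn_gt0 ?subnKC ?(ltnW im) ?repL.
apply: eq_big_nat => i /andP[i1 im].
have k0 : 0 < m - i by rewrite subn_gt0.
have e : i + (m - i) = m by rewrite subnKC // ltnW.
have xyL : repr (x (m - i) * y (m - i)) \in 'L_(m - i)(G) by apply: rep_mem; rewrite groupM ?inQ.
rewrite (@wdrE i (m - i) m _ _ (repr (x (m - i)) * repr (y (m - i)))) ?repL ?groupM //.
  by rewrite (bil_rE i1 k0 e) ?repL.
all: try by apply: repL.
by rewrite repK CM ?repG // !repK.
Qed.

Lemma br_zero_l w : br zero w = zero.
Proof.
apply: fext => m; rewrite /LG_br /LG_zero; apply: prod_one => i _.
by rewrite r1 comm1g morph1.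
Qed.

Lemma br_zero_r w : br w zero = zero.
Proof.
apply: fext => m; rewrite /LG_br /LG_zero; apply: prod_one => i _.
by rewrite r1 commg1 morph1.
Qed.


Lemma add_x0 x : add x zero = x.
Proof. by apply: fext => m; rewrite /LG_add /LG_zero mulg1. Qed.

Lemma add_CA a b c : inL a -> inL b -> add a (add b c) = add b (add a c).
Proof. by move=> aL bL; rewrite !add_A (add_C aL bL). Qed.

Lemma hom_zero d : hom d zero.
Proof. by split; [apply: in_zero | ]. Qed.

Lemma hom_add d x y : hom d x -> hom d y -> hom d (add x y).
Proof.
move=> [xL xd] [yL yd]; split; first exact: in_add.
by move=> k kd; rewrite /LG_add xd // yd // mulg1.
Qed.

Lemma brh_self d x : 0 < d -> hom d x -> br x x = zero.
Proof.
move=> d0 hx; apply: fext => j; rewrite (brh_at d0 d0 hx hx) /LG_zero.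
by case: eqP => // _; rewrite commgg morph1.
Qed.

Lemma brh_sym d e x y : 0 < d -> 0 < e -> hom d x -> hom e y -> br x y = br y x.
Proof.
move=> d0 e0 hx hy; apply: fext => j.
rewrite (brh_at d0 e0 hx hy) (brh_at e0 d0 hy hx) (addnC e d).
case: hx => xL _; case: hy => yL _.
by case: eqP => // ->; rewrite (antisym d0 e0 (repL d xL) (repL e yL)).
Qed.

Definition lsumL (s : seq T) := lsum add zero s.

Lemma lsum_at (s : seq T) m : lsumL s m = \prod_(f <- s) f m.
Proof. by elim: s => [|a s IH]; rewrite ?big_nil ?big_cons //= /LG_add IH. Qed.

Lemma in_lsum (s : seq T) : (forall f, List.In f s -> inL f) -> inL (lsumL s).
Proof.
elim: s => [|a s IH] H /=; first exact: in_zero.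
apply: in_add; first by apply: H; left.
by apply: IH => f fs; apply: H; right.
Qed.

Definition homs (s : seq T) := forall f, List.In f s -> exists2 d, 0 < d & hom d f.

Lemma homs_in s : homs s -> forall f, List.In f s -> inL f.
Proof. by move=> H f /H [d _ [fL _]]. Qed.

Lemma homs_tl a s : homs (a :: s) -> homs s.
Proof. by move=> H f fs; apply: H; right. Qed.

Lemma prod_iota_if (rT : finGroupType) a N m (u : rT) :
  \prod_(j <- iota a N) (if m == j then u else 1) = if (a <= m < a + N) then u else 1.
Proof.
elim: N a => [|N IH] a /=.
  by rewrite big_nil addn0; case: (leqP a m) => am //=; rewrite ltnNge am.
rewrite big_cons IH; case: (eqVneq m a) => [->|ma].
  by rewrite ltnn /= mulg1 leqnn addnS ltnS leq_addr.
rewrite mul1g addnS addSn.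
by case: (ltngtP a m) ma => //=.
Qed.

Definition proj d (x : T) : T := fun m => if m == d then x m else 1.

Lemma proj_hom d x : inL x -> 0 < d -> hom d (proj d x).
Proof.
move=> xL d0; split; last by move=> k /eqP/negbTE kd; rewrite /proj kd.
split.
- by rewrite /proj; case: eqP => // _; case: xL.
- by move=> m; rewrite /proj; case: eqP => _; [apply: inQ | apply: group1].
by exists d.+1 => m dm; rewrite /proj; case: eqP => // md; rewrite md ltnn in dm.
Qed.


Lemma In_map (F : nat -> T) (s : seq nat) f :
  List.In f (map F s) -> exists2 j, j \in s & f = F j.
Proof.
elim: s => [|a s IH] //= [<-|/IH [j js ->]]; first by exists a; rewrite ?inE ?eqxx.
by exists j; rewrite // inE js orbT.
Qed.

Lemma decomp x : inL x -> exists N, x = lsumL [seq proj j x | j <- iota 1 N].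
Proof.
case=> x0 _ [N HN]; exists N; apply: fext => m.
rewrite lsum_at big_map /proj prod_iota_if.
case: m => [|m]; first by rewrite x0.
rewrite ltnS /= add1n ltnS; case: leqP => // Nm.
by apply: HN; apply: ltnW.
Qed.

Lemma homs_decomp x N : inL x -> homs [seq proj j x | j <- iota 1 N].
Proof.
move=> xL f /In_map [j]; rewrite mem_iota => /andP[j1 _] ->.
by exists j => //; apply: proj_hom.
Qed.

Lemma sym_lsum s a d : homs s -> 0 < d -> hom d a -> br (lsumL s) a = br a (lsumL s).
Proof.
move=> + d0 ha; elim: s => [|b s IH] Hs /=.
  by rewrite br_zero_l br_zero_r.
have aL := hom_in ha.
have bL : inL b by apply: (homs_in Hs); left.
have LL : inL (lsumL s) by apply: in_lsum; apply: homs_in (homs_tl Hs).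
rewrite br_addl // br_addr // (IH (homs_tl Hs)).
have [e e0 hb] := Hs b (or_introl erefl).
by rewrite (brh_sym e0 d0 hb ha).
Qed.

Lemma alt_lsum s : homs s -> br (lsumL s) (lsumL s) = zero.
Proof.
elim: s => [|b s IH] Hs /=; first by rewrite br_zero_l.
have bL : inL b by apply: (homs_in Hs); left.
have LL : inL (lsumL s) by apply: in_lsum; apply: homs_in (homs_tl Hs).
have [e e0 hb] := Hs b (or_introl erefl).
have LbL := in_add bL LL.
rewrite br_addl // !br_addr // (IH (homs_tl Hs)).
rewrite (brh_self e0 hb) add_0 add_x0 (sym_lsum (homs_tl Hs) e0 hb).
by rewrite add_xx //; apply: br_in.
Qed.

Lemma br_alt x : inL x -> br x x = zero.
Proof.
move=> xL; have [N ->] := decomp xL.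
by apply: alt_lsum; apply: homs_decomp.
Qed.


Definition J x y z := add (br x (br y z)) (add (br y (br z x)) (br z (br x y))).

Ltac inl := repeat first [assumption | apply: in_add | apply: br_in | apply: in_zero].

Lemma J_in x y z : inL x -> inL y -> inL z -> inL (J x y z).
Proof. by move=> xL yL zL; rewrite /J; inl. Qed.

Lemma rearr a1 a2 b1 b2 c1 c2 : inL a1 -> inL a2 -> inL b1 -> inL b2 -> inL c1 -> inL c2 ->
  add (add a1 a2) (add (add b1 b2) (add c1 c2)) = add (add a1 (add b1 c1)) (add a2 (add b2 c2)).
Proof.
move=> a1L a2L b1L b2L c1L c2L.
rewrite -!add_A; congr (add a1 _).
by rewrite (add_CA _ a2L b1L) (add_CA _ b2L c1L) (add_CA _ a2L c1L).
Qed.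

Lemma J_addl x1 x2 y z : inL x1 -> inL x2 -> inL y -> inL z ->
  J (add x1 x2) y z = add (J x1 y z) (J x2 y z).
Proof.
move=> x1L x2L yL zL; rewrite /J.
have yzL : inL (br y z) by inl.
have zx1L : inL (br z x1) by inl.
have zx2L : inL (br z x2) by inl.
have x1yL : inL (br x1 y) by inl.
have x2yL : inL (br x2 y) by inl.
rewrite (br_addl x1L x2L yzL) (br_addr x1L x2L zL) (br_addr zx1L zx2L yL).
rewrite (br_addl x1L x2L yL) (br_addr x1yL x2yL zL).
by apply: rearr; inl.
Qed.

Lemma J_zero_l y z : J zero y z = zero.
Proof. by rewrite /J !(br_zero_l, br_zero_r) !add_0. Qed.

Lemma J_cyc x y z : inL x -> inL y -> inL z -> J x y z = J y z x.
Proof.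
move=> xL yL zL; rewrite /J add_C; last by inl.
  by rewrite -add_A.
by inl.
Qed.

Lemma J_lsum s y z : (forall f, List.In f s -> inL f) -> inL y -> inL z ->
  (forall f, List.In f s -> J f y z = zero) -> J (lsumL s) y z = zero.
Proof.
move=> + yL zL; elim: s => [|a s IH] Hs HJ /=; first exact: J_zero_l.
rewrite J_addl //; last by apply: in_lsum => f fs; apply: Hs; right.
  rewrite HJ; last by left.
  by rewrite IH ?add_0 // => f fs; [apply: Hs | apply: HJ]; right.
by apply: Hs; left.
Qed.

Lemma brbr_at x y z a b c : 0 < a -> 0 < b -> 0 < c -> hom a x -> hom b y -> hom c z ->
  forall j, br x (br y z) j =
    if j == a + (b + c) then C j [~ repr (x a), [~ repr (y b), repr (z c)]] else 1.
Proof.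
move=> a0 b0 c0 hx hy hz j.
have bc0 : 0 < b + c by rewrite addn_gt0 b0.
have hyz := brh_hom b0 c0 hy hz.
rewrite (brh_at a0 bc0 hx hyz); case: eqP => // ->.
have [xL _] := hx; have [yL _] := hy; have [zL _] := hz.
have wL := commH b0 c0 (repL b yL) (repL c zL).
apply: (wdrE a0 bc0 erefl (repL a xL)) => //.
  by apply: repL; apply: br_in.
by rewrite repK (brh_at b0 c0 hy hz) eqxx.
Qed.

Lemma J_hom x y z a b c : 0 < a -> 0 < b -> 0 < c -> hom a x -> hom b y -> hom c z ->
  J x y z = zero.
Proof.
move=> a0 b0 c0 hx hy hz; apply: fext => j; rewrite /J /LG_add /LG_zero.
rewrite (brbr_at a0 b0 c0 hx hy hz) (brbr_at b0 c0 a0 hy hz hx) (brbr_at c0 a0 b0 hz hx hy).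
have -> : b + (c + a) = a + (b + c) by lia.
have -> : c + (a + b) = a + (b + c) by lia.
case: eqP => _; last by rewrite !mulg1.
case: hx => xL _; case: hy => yL _; case: hz => zL _.
have xG := repG a xL; have yG := repG b yL; have zG := repG c zL.
rewrite -(@CM j [~ repr (y b), [~ repr (z c), repr (x a)]] [~ repr (z c), [~ repr (x a), repr (y b)]]) ?groupR //.
rewrite -(@CM j [~ repr (x a), [~ repr (y b), repr (z c)]]) ?groupM ?groupR //.
rewrite mulgA JacG // morph1.
all: by rewrite ?groupV ?groupR.
Qed.

Lemma Jac x y z : inL x -> inL y -> inL z -> J x y z = zero.
Proof.
move=> xL yL zL.
have [Nx ->] := decomp xL; have hsx := homs_decomp (N:=Nx) xL.
apply: J_lsum => //; first exact: homs_in.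
move=> a /hsx [da da0 ha]; have aL := hom_in ha.
rewrite J_cyc //.
have [Ny ->] := decomp yL; have hsy := homs_decomp (N:=Ny) yL.
apply: J_lsum => //; first exact: homs_in.
move=> b /hsy [db db0 hb]; have bL := hom_in hb.
rewrite J_cyc //.
have [Nz ->] := decomp zL; have hsz := homs_decomp (N:=Nz) zL.
apply: J_lsum => //; first exact: homs_in.
move=> c /hsz [dc dc0 hc].
exact: (J_hom dc0 da0 db0 hc ha hb).
Qed.


Definition gf (s : seq T) (a b : T) : gT :=
  foldr (fun (t : T) (w : gT) => [~ repr (t 1%N), w]) [~ repr (a 1%N), repr (b 1%N)] s.

Definition homs1 (s : seq T) := forall t, List.In t s -> hom 1%N t.

Lemma itbr_at s a b : homs1 s -> hom 1%N a -> hom 1%N b ->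
  [/\ hom (size s).+2 (@itbr T br s a b),
      (forall j, @itbr T br s a b j = if j == (size s).+2 then C j (gf s a b) else 1)
    & gf s a b \in 'L_(size s).+2(G)].
Proof.
move=> + ha hb; elim: s => [|t s IH] Hs /=.
  have [aL _] := ha; have [bL _] := hb.
  split; first exact: (brh_hom (ltn0Sn 0) (ltn0Sn 0) ha hb).
    by move=> j; rewrite /itbr /= (brh_at (ltn0Sn 0) (ltn0Sn 0) ha hb).
  by rewrite /gf /=; apply: (commH (h := 1) (k := 1)) => //; apply: repL.
have Hs' : homs1 s by move=> u us; apply: Hs; right.
have ht : hom 1%N t by apply: Hs; left.
have [hI vI gI] := IH Hs'.
have [tL _] := ht.
have k0 : 0 < (size s).+2 by [].
split.
- exact: (brh_hom (ltn0Sn 0) k0 ht hI).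
- move=> j; rewrite /itbr /= -/(@itbr T br s a b) (brh_at (ltn0Sn 0) k0 ht hI) ?add1n.
  case: eqP => // ->; rewrite /gf /= -/(gf s a b).
  apply: (wdrE (h := 1) (k := (size s).+2)) => //; first exact: repL.
    by apply: repL; case: hI.
  by rewrite repK vI eqxx.
- by rewrite /gf /= -/(gf s a b); apply: (commH (h := 1) (k := (size s).+2)) => //; apply: repL.
Qed.

Lemma gf_A s a b : homs1 s -> hom 1%N a -> hom 1%N b -> gf s a b \in 'L_2(G).
Proof. by move=> Hs ha hb; have [_ _ gL] := itbr_at Hs ha hb; apply: HS gL. Qed.

Lemma rep1G t : hom 1%N t -> repr (t 1%N) \in G.
Proof. by case=> tL _; apply: repG. Qed.

Lemma gf_perm s s' a b : Permutation s s' -> homs1 s -> hom 1%N a -> hom 1%N b ->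
  gf s a b = gf s' a b.
Proof.
move=> P + ha hb; elim: P => [//|x l l' P IH|x y l|l l' l'' P1 IH1 P2 IH2] Hs.
- rewrite /gf /= -!/(gf _ a b) IH //.
  by move=> u ul; apply: Hs; right.
- have yG : repr (y 1%N) \in G by apply: rep1G; apply: Hs; left.
  have xG : repr (x 1%N) \in G by apply: rep1G; apply: Hs; right; left.
  have lA : gf l a b \in 'L_2(G) by apply: gf_A => // u ul; apply: Hs; right; right.
  by rewrite /gf /= -!/(gf _ a b) (E1 yG xG lA).
- rewrite IH1 // IH2 // => u ul; apply: Hs.
  by apply: Permutation_in ul; apply: Permutation_sym.
Qed.

Lemma size_length (A : Type) (s : seq A) : size s = length s.
Proof. by elim: s => //= x s ->. Qed.

Lemma nth_In (A : Type) (x0 : A) (s : seq A) j : j < size s -> List.In (nth x0 s j) s.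
Proof.
elim: s j => [|x s IH] [|j] //= js; first by left.
by right; apply: IH.
Qed.

Lemma gf_dup s a b : homs1 s -> hom 1%N a -> hom 1%N b ->
  forall j1 j2, j1 < j2 -> j2 < size s -> nth zero s j1 = nth zero s j2 -> gf s a b = 1.
Proof.
move=> + ha hb; elim: s => [|x l IH] Hs j1 j2 //= j12 j2s e.
have Hl : homs1 l by move=> u ul; apply: Hs; right.
have xG : repr (x 1%N) \in G by apply: rep1G; apply: Hs; left.
case: j1 j12 e => [|j1] j12 e; last first.
  case: j2 j12 j2s e => // j2 j12 j2s e.
  by rewrite /gf /= -/(gf l a b) (IH Hl j1 j2) // commg1.
case: j2 j12 j2s e => // j2 _ j2s /= e.
have xl : List.In x l by rewrite e; apply: nth_In.
have [l1 [l2 El]] := List.in_split x l xl.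
have P : Permutation l (x :: (l1 ++ l2)%list).
  by rewrite El; apply: Permutation_sym; apply: Permutation_middle.
rewrite /gf /= -/(gf l a b) (gf_perm P) //= -/(gf _ a b) E2 //.
apply: gf_A => // u ul; apply: Hl.
by apply: (Permutation_in _ (Permutation_sym P)); right.
Qed.


Local Notation psi := (@LG_phi gT G n phi).

Lemma phi_rep1 w : w \in G -> phi (repr (C 1%N w)) = phi w.
Proof.
move=> wG.
have wL : w \in 'L_1(G) by rewrite lcn1.
have rL := rep_mem (Qmem wL).
have rG : repr (C 1%N w) \in G by rewrite -(lcn1 G).
have cA := Ceq wG rG (esym (repK _)).
have cG := HG cA.
have -> : repr (C 1%N w) = w * (w^-1 * repr (C 1%N w)) by rewrite mulKVg.
rewrite phiM //; move: cA; rewrite memA => /andP[_ /eqP ->].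
by rewrite addr0.
Qed.

Lemma psi_zero : psi zero = 0%R.
Proof. by rewrite /LG_phi /LG_zero r1 phi1. Qed.

Lemma psi_add x y : inL x -> inL y -> psi (add x y) = (psi x + psi y)%R.
Proof.
move=> xL yL; rewrite /LG_phi /LG_add.
have xG := repG 1%N xL; have yG := repG 1%N yL.
rewrite -{1}(repK (x 1%N)) -{1}(repK (y 1%N)) -CM // phi_rep1 ?groupM //.
by rewrite phiM.
Qed.

Lemma psi_hi m x : 2 <= m -> hom m x -> psi x = 0%R.
Proof.
move=> m2 [_ xm]; rewrite /LG_phi xm; first by rewrite r1 phi1.
by move=> e; rewrite -e in m2.
Qed.

Lemma psi_br x y : psi (br x y) = 0%R.
Proof. by rewrite /LG_phi /LG_br big_geq // r1 phi1. Qed.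

Lemma ker1 x : inL x -> psi x = 0%R -> x 1%N = 1.
Proof.
move=> xL e.
move: e; rewrite /LG_phi => e.
have rA : repr (x 1%N) \in 'L_2(G) by rewrite memA repG //= e eqxx.
by rewrite -(repK (x 1%N)) C1.
Qed.

Lemma ker_br x y : inL x -> inL y -> x 1%N = 1 -> y 1%N = 1 -> br x y = zero.
Proof.
move=> xL yL x1 y1; apply: fext => m; rewrite /LG_br /LG_zero.
apply: prod_one => i /andP[i1 im].
case: (eqVneq i 1%N) => [->|ine1]; first by rewrite x1 r1 comm1g morph1.
case: (eqVneq (m - i) 1%N) => [e|mie1]; first by rewrite e y1 r1 commg1 morph1.
have i2 : 2 <= i by move: i1 ine1; clear; lia.
have mi2 : 2 <= m - i by move: im mie1; clear; lia.
by rewrite commA ?morph1 //; apply: HS (repL _ _) => //.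
Qed.


Lemma psi_surj (v : Vn n) : exists2 x, inL x & psi x = v.
Proof.
pose w := (\prod_(i < n | v ord0 i == 1%R) g i)%g.
have [wG pw] : w \in G /\ phi w = (\sum_(i < n | v ord0 i == 1%R) e_ i)%R.
  apply: (big_ind2 (fun a b => a \in G /\ phi a = b)).
  - by rewrite group1 phi1.
  - by move=> x1 x2 y1 y2 [x1G <-] [y1G <-]; split; [exact: groupM | exact: phiM].
  - by move=> i _; case: hG => _ /(_ i) [gG [_ ge]] _ _.
exists (fun m => if m == 1%N then C m w else 1).
  split=> //.
  - by move=> m; case: eqP => [->|_]; [apply: Qmem; rewrite lcn1 | apply: group1].
  - by exists 2 => m; case: eqP => // ->.
rewrite /LG_phi /= phi_rep1 // pw.
apply/rowP => j; rewrite summxE.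
rewrite (eq_bigr (fun i => ((j == i)%:R)%R)); last by move=> i _; rewrite mxE eqxx.
case: (eqVneq (v ord0 j) 1%R) => [vj|vj].
  rewrite (bigD1 j) ?vj //= eqxx big1 ?addr0 // => i /andP[_ ij].
  by rewrite eq_sym (negbTE ij).
rewrite big1; last first.
  by move=> i vi; case: eqP => // ji; rewrite ji vi in vj.
by case: (v ord0 j) vj => [[|[|k]]] //= Hk _; apply/val_inj.
Qed.

Definition sing d w : T := fun m => if m == d then C m w else 1.

Lemma sing_hom d w : 0 < d -> w \in 'L_d(G) -> hom d (sing d w).
Proof.
move=> d0 wL; split; last by move=> k /eqP/negbTE kd; rewrite /sing kd.
split.
- by rewrite /sing; case: eqP => // e; rewrite -e in d0.
- by move=> m; rewrite /sing; case: eqP => [->|_]; [apply: Qmem | apply: group1].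
by exists d.+1 => m dm; rewrite /sing; case: eqP => // md; rewrite md ltnn in dm.
Qed.

Lemma sing_add d w1 w2 : w1 \in G -> w2 \in G -> sing d (w1 * w2) = add (sing d w1) (sing d w2).
Proof.
by move=> w1G w2G; apply: fext => m; rewrite /sing /LG_add; case: eqP => _; rewrite ?CM ?mulg1.
Qed.

Lemma sing1 d : sing d 1 = zero.
Proof. by apply: fext => m; rewrite /sing /LG_zero; case: eqP => _; rewrite ?morph1. Qed.

Lemma sing_br e a b : 0 < e -> a \in 'L_e(G) -> b \in G ->
  br (sing e a) (sing 1%N b) = sing (e + 1) [~ a, b].
Proof.
move=> e0 aL bG.
have bL : b \in 'L_1(G) by rewrite lcn1.
have ha := sing_hom e0 aL; have hb := sing_hom (ltn0Sn 0) bL.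
apply: fext => j; rewrite (brh_at e0 (ltn0Sn 0) ha hb) /sing.
case: eqP => // ->; rewrite !eqxx.
have raL : repr (C e a) \in 'L_e(G) by apply: rep_mem; apply: Qmem.
have rbL : repr (C 1%N b) \in 'L_1(G) by apply: rep_mem; apply: Qmem.
rewrite (wdlE e0 (ltn0Sn 0) erefl raL aL rbL); last by rewrite repK.
by rewrite (wdrE e0 (ltn0Sn 0) erefl aL rbL bL) // repK.
Qed.

Lemma proj_sing d x : inL x -> proj d x = sing d (repr (x d)).
Proof. by move=> xL; apply: fext => m; rewrite /proj /sing; case: eqP => // ->; rewrite repK. Qed.

Lemma lsum_cat (s1 s2 : seq T) : lsumL (s1 ++ s2) = add (lsumL s1) (lsumL s2).
Proof. by elim: s1 => [|a s IH] /=; rewrite ?add_0 // IH add_A. Qed.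

Definition brs (s : seq (T * T)) := lsumL [seq br p.1 p.2 | p <- s].
Definition pairsIn (s : seq (T * T)) := forall p, List.In p s -> inL p.1 /\ inL p.2.

Lemma In_cat (A : Type) (p : A) s1 s2 : List.In p (s1 ++ s2) -> List.In p s1 \/ List.In p s2.
Proof.
elim: s1 => [|a s IH] /=; first by right.
by case=> [->|/IH [H|H]]; [left; left | left; right | right].
Qed.

Lemma brs_cat s1 s2 : brs (s1 ++ s2) = add (brs s1) (brs s2).
Proof. by rewrite /brs map_cat lsum_cat. Qed.

Lemma pairs_cat s1 s2 : pairsIn s1 -> pairsIn s2 -> pairsIn (s1 ++ s2).
Proof. by move=> H1 H2 p pin; case: (In_cat pin) => [/H1|/H2]. Qed.

Lemma sing_brs d w : 1 < d -> w \in 'L_d(G) -> exists2 s, pairsIn s & sing d w = brs s.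
Proof.
case: d => [|[|d]] // _ /gen_prodgP [k [c Hc ->]].
elim: k c Hc => [|k IH] c Hc.
  by exists [::] => //; rewrite big_ord0 sing1.
rewrite big_ord_recr /=.
have [s1 p1 e1] := IH (fun i => c (widen_ord (leqnSn k) i)) (fun i => Hc _).
case/imset2P: (Hc ord_max) => a b aL bG ec.
have cL : forall i, c i \in 'L_d.+2(G) by move=> i; apply: mem_gen; apply: Hc.
rewrite sing_add; first last.
- by rewrite (HG (cL ord_max)).
- by rewrite group_prod // => i _; apply: (HG (cL _)).
exists (s1 ++ [:: (sing d.+1 a, sing 1%N b)]).
  apply: pairs_cat => // p [<-|//]; split; apply: hom_in; apply: sing_hom => //.
rewrite brs_cat e1 /brs /= add_x0 ec.
by rewrite sing_br // addn1.
Qed.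


Lemma lsum_brs (l : seq T) : (forall f, List.In f l -> exists2 s, pairsIn s & f = brs s) ->
  exists2 s, pairsIn s & lsumL l = brs s.
Proof.
elim: l => [|f l IH] H /=; first by exists [::].
have [s1 p1 e1] := H f (or_introl erefl).
have [s2 p2 e2] : exists2 s, pairsIn s & lsumL l = brs s.
  by apply: IH => u ul; apply: H; right.
by exists (s1 ++ s2); [apply: pairs_cat | rewrite brs_cat -e1 -e2].
Qed.

Lemma ker_brs x : inL x -> psi x = 0%R -> exists2 s, pairsIn s & x = brs s.
Proof.
move=> xL e; have x1 := ker1 xL e.
have [N ->] := decomp xL; apply: lsum_brs => f /In_map [j]; rewrite mem_iota => /andP[j1 _] ->.
case: (eqVneq j 1%N) => [->|jn1].
  exists [::] => //; apply: fext => m; rewrite /proj /LG_zero.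
  by case: eqP => // ->.
rewrite proj_sing //; apply: sing_brs; last exact: repL.
by move: j1 jn1; clear; lia.
Qed.

Lemma brs_in s : pairsIn s -> inL (brs s).
Proof.
elim: s => [|p s IH] H; first exact: in_zero.
rewrite /brs /= -/(brs s); apply: in_add.
  by have [] := H p (or_introl erefl); apply: br_in.
by apply: IH => q qs; apply: H; right.
Qed.

Lemma psi_brs s : pairsIn s -> psi (brs s) = 0%R.
Proof.
elim: s => [|p s IH] H; first exact: psi_zero.
have Hs : pairsIn s by move=> q qs; apply: H; right.
have [p1 p2] := H p (or_introl erefl).
rewrite /brs /= -/(brs s) psi_add ?psi_br ?IH ?add0r //; first exact: br_in.
exact: brs_in.
Qed.

Lemma nthP_In (A : Type) (x0 : A) (P : A -> Prop) s :
  (forall j, j < size s -> P (nth x0 s j)) -> forall p, List.In p s -> P p.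
Proof.
elim: s => [|a s IH] H p //= [<-|ps]; first by apply: (H 0).
by apply: IH ps => j js; apply: (H j.+1).
Qed.

Lemma In_nthP (A : Type) (x0 : A) (P : A -> Prop) s :
  (forall p, List.In p s -> P p) -> forall j, j < size s -> P (nth x0 s j).
Proof. by move=> H j js; apply: H; apply: nth_In. Qed.

Lemma g3 x : inL x -> exists s : seq T,
  (forall j, j < size s -> hom j.+1 (nth zero s j)) /\ x = lsum add zero s.
Proof.
move=> xL; have [N e] := decomp xL.
exists [seq proj j x | j <- iota 1 N]; split => // j.
rewrite size_map size_iota => jN.
by rewrite (nth_map 0) ?size_iota // nth_iota // add1n; apply: proj_hom.
Qed.

Lemma g4 s : (forall j, j < size s -> hom j.+1 (nth zero s j)) ->
  lsum add zero s = zero -> forall j, j < size s -> nth zero s j = zero.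
Proof.
move=> H e j js; apply: fext => k.
have [_ hk] := H j js.
case: (eqVneq k j.+1) => [->|kj]; last by rewrite hk //; apply/eqP.
have := congr1 (fun f : T => f j.+1) e; rewrite /LG_zero -/(lsumL s) lsum_at.
rewrite (big_nth zero) (@prod_single _ 0 (size s) j) //.
move=> i /andP[_ iS] ij; have [_ hi] := H i iS; apply: hi.
by move=> [e']; rewrite e' eqxx in ij.
Qed.


Lemma last5 x y i : x \in G -> y \in G -> phi x = e_ i ->
  [~ x, [~ x, y]] \in 'L_4(G).
Proof.
move=> xG yG ex.
have [gG [g2 ge]] : g i \in G /\ (g i ^+ 2 = 1) /\ phi (g i) = e_ i by case: hG.
have gV : (g i)^-1 = g i by apply/eqP; rewrite eq_invg_mul; move: g2; rewrite expgS expg1 => ->.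
pose c := (g i)^-1 * x.
have cG : c \in G by rewrite groupM ?groupV.
have cA : c \in 'L_2(G).
  rewrite memA cG /= phiM ?groupV // ex gV ge.
  by rewrite v2.
have ex2 : x = g i * c by rewrite /c mulKVg.
have xx : x * x = [~ g i, c].
  rewrite (commGA gG cA) conjgE gV ex2 -!mA.
  by congr (_ * _); rewrite !mA.
rewrite (commGA xG (commGG xG yG)) -commMgJ xx.
by apply: (commH (h := 3) (k := 1)) => //; apply: (commH (h := 1) (k := 2)).
Qed.

Theorem main : n_expansion_Lie inL add zero br hom psi.
Proof.
split.
- split.
  + split.
    * split.
      -- exact: in_zero.
      -- exact: in_add.
      -- exact: add_C.
      -- by move=> *; apply: add_A.
      -- by move=> x xL; split; [apply: add_0 | apply: add_xx].
    * split.
      -- exact: br_in.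
      -- by move=> x y w xL yL wL; split; [apply: br_addl | apply: br_addr].
      -- exact: br_alt.
      -- by move=> x y w xL yL wL; apply: Jac.
    * split.
      -- by move=> m m0; split; [apply: hom_zero | move=> x y; apply: hom_add].
      -- by move=> m x _ hx; apply: hom_in hx.
      -- exact: g3.
      -- exact: g4.
      -- by move=> h k x y h0 k0 hx hy; apply: brh_hom.
  + split.
    * exact: psi_zero.
    * exact: psi_add.
    * by move=> m x m2 hx; apply: psi_hi hx.
    * by move=> x y _ _; apply: psi_br.
    * exact: psi_surj.
- move=> x y xL yL px py.
  have x1 := ker1 xL px; have y1 := ker1 yL py.
  split; first by rewrite psi_add // px py addr0.
    exact: psi_br.
  exact: ker_br.
- move=> x xL; split.
    move=> px; have [s ps e] := ker_brs xL px; exists s; split => //.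
    exact: (@In_nthP _ (zero, zero) (fun p : T * T => inL p.1 /\ inL p.2) s ps).
  move=> [s [Hs ->]]; apply: psi_brs.
  exact: (@nthP_In _ (zero, zero) (fun p : T * T => inL p.1 /\ inL p.2) s Hs).
- split.
  + move=> s s' a b _ Hs ha hb P.
    have H1 : homs1 s by apply: (@nthP_In _ zero (hom 1%N) s Hs).
    have H1' : homs1 s' by move=> t ts; apply: H1; apply: Permutation_in ts; apply: Permutation_sym.
    have [_ v1 _] := itbr_at H1 ha hb; have [_ v2 _] := itbr_at H1' ha hb.
    have es : size s = size s' by rewrite !size_length; apply: Permutation_length.
    by apply: fext => j; rewrite v1 v2 es (gf_perm P).
  + move=> s a b _ Hs ha hb j1 j2 j12 j2s e.
    have H1 : homs1 s by apply: (@nthP_In _ zero (hom 1%N) s Hs).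
    have [_ v1 _] := itbr_at H1 ha hb.
    apply: fext => j; rewrite v1 (gf_dup H1 ha hb j12 j2s e) morph1 /LG_zero.
    by case: eqP.
- move=> t1 t2 h1 h2 [i ei].
  have H1 : homs1 [:: t1] by move=> t [<-|].
  have [_ v1 _] := itbr_at H1 h1 h2.
  apply: fext => j; have := v1 j; rewrite /itbr /= => ->.
  have t1G := rep1G h1; have t2G := rep1G h2.
  rewrite /LG_zero; case: eqP => // ->.
  apply: C1; exact: (last5 t1G t2G ei).
Qed.

End Grp.

Unset Implicit Arguments.

Theorem proposition3p3 (gT : finGroupType) (G : {group gT}) (n : nat)
    (phi : gT -> Vn n) (g : 'I_n -> gT) :
  n_expansion_group G phi g ->
  n_expansion_Lie (@LG_in gT G) (@LG_add gT G) (@LG_zero gT G)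
    (@LG_br gT G) (@LG_hom gT G) (@LG_phi gT G n phi).
Proof. exact: main. Qed.
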